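(* Let $X$ be a nonempty compact subset of $\mathbb{R}^n$, $\varphi:X\to\mathbb{R}$ upper semicontinuous, and $\psi:X\to\mathbb{R}$ Lipschitz continuous with constant $L_\psi$ with respect to a norm $\|\cdot\|$. For $\varepsilon\geq0$ let $F_\varepsilon=\{x\in X:\varphi(x)\geq\sup_{x'\in X}\varphi(x')-\varepsilon\}$ and $g(\varepsilon)=\sup_{x\in F_\varepsilon}d(x,F_0)$, where $d(x,F_0)=\inf_{y\in F_0}\|y-x\|$. Let $M=\sup_X\psi-\inf_X\psi$. Then for every $\delta\geq0$, \[ \Big|\sup_{x\in X}\big(\varphi(x)+\delta\psi(x)\big)-\Big[\sup_{x\in X}\varphi(x)+\delta\sup_{x\in\operatorname{arg\,max}\varphi}\psi(x)\Big]\Big|\leq L_\psi\,\delta\, g(\delta M). \]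
   Context: $\operatorname{arg\,max}\varphi=\{x\in X:\varphi(x)=\sup_X\varphi\}$. *)

(* Defs.v *)
From HB Require Import structures.
From mathcomp Require Import all_boot all_order all_algebra.
From mathcomp Require Import all_classical all_reals all_analysis.
Set Implicit Arguments. Unset Strict Implicit. Unset Printing Implicit Defensive.
Import Order.TTheory GRing.Theory Num.Theory.
Import numFieldNormedType.Exports.
Local Open Scope classical_set_scope.
Local Open Scope ring_scope.

(* A norm on R^n = 'rV[R]_n (arbitrary, not necessarily the library's). *)
Definition is_normR {R : realType} {n : nat} (N : 'rV[R]_n -> R) : Prop :=
  [/\ forall x, N x = 0 -> x = 0,
      forall (a : R) x, N (a *: x) = `|a| * N x
    & forall x y, N (x + y) <= N x + N y].

Definition usc_rel {R : realType} {n : nat} (X : set 'rV[R]_n)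
  (f : 'rV[R]_n -> R) : Prop :=
  forall x, X x -> forall e : R, 0 < e ->
    \forall y \near x, X y -> f y < f x + e.

Definition lip_wrt_norm {R : realType} {n : nat} (N : 'rV[R]_n -> R)
  (X : set 'rV[R]_n) (f : 'rV[R]_n -> R) (L : R) : Prop :=
  forall x y, X x -> X y -> `|f x - f y| <= L * N (x - y).

Definition supf {R : realType} {n : nat} (X : set 'rV[R]_n) (f : 'rV[R]_n -> R) : R :=
  sup (f @` X).
Definition inff {R : realType} {n : nat} (X : set 'rV[R]_n) (f : 'rV[R]_n -> R) : R :=
  inf (f @` X).

Definition argmaxR {R : realType} {n : nat} (X : set 'rV[R]_n) (phi : 'rV[R]_n -> R)
  : set 'rV[R]_n := [set x | X x /\ phi x = supf X phi].

Definition Feps {R : realType} {n : nat} (X : set 'rV[R]_n) (phi : 'rV[R]_n -> R)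
  (eps : R) : set 'rV[R]_n := [set x | X x /\ supf X phi - eps <= phi x].

Definition distNorm {R : realType} {n : nat} (N : 'rV[R]_n -> R)
  (A : set 'rV[R]_n) (x : 'rV[R]_n) : R := inf [set N (y - x) | y in A].

Definition gfun {R : realType} {n : nat} (N : 'rV[R]_n -> R) (X : set 'rV[R]_n)
  (phi : 'rV[R]_n -> R) (eps : R) : R :=
  sup [set distNorm N (Feps X phi 0) x | x in Feps X phi eps].

(* Main.v *)
Require Import Defs.
From HB Require Import structures.
From mathcomp Require Import all_boot all_order all_algebra.
From mathcomp Require Import all_classical all_reals all_analysis.
From mathcomp Require Import lra.
Set Implicit Arguments. Unset Strict Implicit. Unset Printing Implicit Defensive.
Import Order.TTheory GRing.Theory Num.Theory.
Import numFieldNormedType.Exports.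
Local Open Scope classical_set_scope.
Local Open Scope ring_scope.

Lemma usc_ub (R : realType) (T : topologicalType) (X : set T) (f : T -> R) :
  compact X ->
  (forall x, X x -> forall e : R, 0 < e -> \forall y \near x, X y -> f y < f x + e) ->
  exists B, forall x, X x -> f x <= B.
Proof.
move=> /compact_near_coveringP cX usc.
have := cX R (pinfty_nbhs R) (fun i y => X y -> f y < i) _.
case.
- move=> x Xx; exists ([set y | X y -> f y < f x + 1], [set i | f x + 1 < i]).
    split => //=; first exact: usc.
    by apply: nbhs_pinfty_gt; rewrite num_real.
  by case=> y i /= [H1 H2] Xy; apply: lt_trans (H1 Xy) H2.
move=> M [_ HM]; exists (M + 1) => x Xx.
by apply/ltW/(HM (M+1)); rewrite ?ltrDl.
Qed.
Lemma usc_max (R : realType) (T : topologicalType) (X : set T) (f : T -> R) :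
  compact X -> X !=set0 ->
  (forall x, X x -> forall e : R, 0 < e -> \forall y \near x, X y -> f y < f x + e) ->
  exists2 m, X m & forall x, X x -> f x <= f m.
Proof.
move=> cX X0 usc.
have [B HB] := usc_ub cX usc.
have hs : has_sup (f @` X).
  split; first by case: X0 => x Xx; exists (f x), x.
  by exists B => _ [x Xx <-]; exact: HB.
set S := sup (f @` X).
apply: contrapT => nmax.
have lt : forall x, X x -> f x < S.
  move=> x Xx; rewrite ltNge; apply/negP => Sx; apply: nmax; exists x => // y Xy.
  apply: le_trans Sx; exact: (sup_upper_bound hs); exists y.
move/compact_near_coveringP: cX => cX.
have := cX R (at_right 0) (fun e y => X y -> f y < S - e) _.
case.
- move=> x Xx; have d0 : 0 < (S - f x) / 2 by rewrite divr_gt0 // subr_gt0 lt.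
  exists ([set y | X y -> f y < f x + (S - f x) / 2], [set e | e < (S - f x) / 2]).
    split => //=; first exact: usc.
    exists ((S - f x) / 2) => //= e; rewrite /ball /= sub0r normrN => He e0.
    exact: le_lt_trans (ler_norm _) He.
  case=> y e /= [H1 H2] Xy; apply: (lt_le_trans (H1 Xy)).
  lra.
move=> r /= r0 Hr.
have e0 : 0 < r / 2 by rewrite divr_gt0.
have Hb : ball_ Num.Def.normr 0 r (r / 2).
  by rewrite /ball_ /= sub0r normrN gtr0_norm //; lra.
have [_ [y Xy <-]] := sup_adherent e0 hs.
have := Hr _ Hb e0 y Xy Xy; rewrite -/S; lra.
Qed.
Lemma coord_le (R : realType) (n : nat) (x : 'rV[R]_n) (i : 'I_n) : `|x 0 i| <= `|x|.
Proof.
rewrite [X in _ <= X]/Num.norm /= mx_normE.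
rewrite -[leLHS]nngE num_le.
exact: (le_bigmax _ (fun ij : 'I_1 * 'I_n => `|x ij.1 ij.2|%:nng) (0, i)).
Qed.

Lemma norm_bound (R : realType) (n : nat) (N : 'rV[R]_n -> R) :
  [/\ forall x, N x = 0 -> x = 0, forall (a : R) x, N (a *: x) = `|a| * N x & forall x y, N (x + y) <= N x + N y] -> exists C, 0 <= C /\ forall x, N x <= C * `|x|.
Proof.
move=> [N0 NZ ND].
have N00 : N 0 = 0 by have := NZ 0 0; rewrite scale0r normr0 mul0r.
have NN x : N (- x) = N x by rewrite -scaleN1r NZ normrN1 mul1r.
have Nge0 x : 0 <= N x.
  have := ND x (-x); rewrite subrr N00 NN; lra.
have Ns (F : 'I_n -> 'rV[R]_n) : N (\sum_j F j) <= \sum_j N (F j).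
  rewrite !unlock; elim: (index_enum _) => [|a s IH] /=; first by rewrite N00.
  exact: le_trans (ND _ _) (lerD (lexx _) IH).
exists (\sum_j N (delta_mx 0 j)); split; first by apply: sumr_ge0.
move=> x; rewrite [in leLHS](row_sum_delta x); apply: le_trans (Ns _) _.
rewrite mulrC mulr_sumr; apply: ler_sum => j _; rewrite NZ [leRHS]mulrC.
by rewrite [leRHS]mulrC ler_wpM2r // coord_le.
Qed.

Theorem lemma5p12 (R : realType) (n : nat) (N : 'rV[R]_n -> R)
  (X : set 'rV[R]_n) (phi psi : 'rV[R]_n -> R) (Lpsi : R) :
  is_normR N ->
  X !=set0 -> compact X ->
  usc_rel X phi ->
  0 <= Lpsi -> lip_wrt_norm N X psi Lpsi ->
  forall delta : R, 0 <= delta ->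
  `| supf X (fun x => phi x + delta * psi x)
     - (supf X phi + delta * supf (argmaxR X phi) psi) |
  <= Lpsi * delta * gfun N X phi (delta * (supf X psi - inff X psi)).
Proof.
move=> hN X0 cX usc L0 lip delta d0.
have [N0 NZ ND] := hN.
have N00 : N 0 = 0 by have := NZ 0 0; rewrite scale0r normr0 mul0r.
have NN x : N (- x) = N x by rewrite -scaleN1r NZ normrN1 mul1r.
have Nge0 x : 0 <= N x by have := ND x (-x); rewrite subrr N00 NN; lra.
have NB x y : N (x - y) = N (y - x) by rewrite -NN opprB.
have [C [C0 HC]] := norm_bound hN.
have [B HB] : exists B, forall x, X x -> `|x| <= B.
  have [M [_ HM]] := compact_bounded cX.
  by exists (M + 1) => x Xx; apply: (HM (M+1)); rewrite ?ltrDl.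
have [xm Xxm xmax] := usc_max cX X0 usc.
set S := phi xm.
have hsphi : supf X phi = S.
  apply/le_anti/andP; split.
  - apply: ge_sup; first by exists S, xm.
    by move=> _ [x Xx <-]; exact: xmax.
  - apply: ub_le_sup; last by exists xm.
    by exists S => _ [x Xx <-]; exact: xmax.
set K := Lpsi * (C * (B + B)).
have psiK x : X x -> psi xm - K <= psi x <= psi xm + K.
  move=> Xx.
  have : `|psi x - psi xm| <= K.
    apply: le_trans (lip _ _ Xx Xxm) _; apply: ler_wpM2l => //.
    apply: le_trans (HC _) _; apply: ler_wpM2l => //.
    apply: le_trans (ler_normB _ _) _; exact: lerD (HB _ Xx) (HB _ Xxm).
  rewrite ler_norml => /andP[h1 h2]; apply/andP; split; lra.
set F0 := argmaxR X phi.
have F0xm : F0 xm by split => //; rewrite hsphi.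
have F0P y : F0 y -> X y /\ phi y = S by case=> Xy; rewrite hsphi.
set sP := supf F0 psi.
have hsP : has_sup (psi @` F0).
  split; first by exists (psi xm), xm.
  exists (psi xm + K) => _ [y /F0P [Xy _] <-]; by case/andP: (psiK y Xy).
have psi_sP y : F0 y -> psi y <= sP.
  by move=> Fy; apply: (sup_upper_bound hsP); exists y.
have hspsi : has_sup (psi @` X).
  split; first by exists (psi xm), xm.
  exists (psi xm + K) => _ [y Xy <-]; by case/andP: (psiK y Xy).
have psi_sup x : X x -> psi x <= supf X psi.
  by move=> Xx; apply: (sup_upper_bound hspsi); exists x.
have inf_psi : inff X psi <= psi xm.
  apply: ge_inf; last by exists xm.
  exists (psi xm - K) => _ [y Xy <-]; by case/andP: (psiK y Xy).
have sP_ge : psi xm <= sP by exact: psi_sP.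
set Mi := supf X psi - inff X psi.
have Mi0 : 0 <= Mi by have := psi_sup _ Xxm; rewrite /Mi; lra.
set V := supf X (fun x => phi x + delta * psi x).
have hsV : has_sup [set phi x + delta * psi x | x in X].
  split; first by exists (phi xm + delta * psi xm), xm.
  exists (S + delta * (psi xm + K)) => _ [y Xy <-].
  apply: lerD; first exact: xmax.
  by apply: ler_wpM2l => //; case/andP: (psiK y Xy).
have V_ge x : X x -> phi x + delta * psi x <= V.
  by move=> Xx; apply: (sup_upper_bound hsV); exists x.
have TV : S + delta * sP <= V.
  suff : delta * sP <= V - S by lra.
  have [d00|dn0] := eqVneq delta 0.
    by have := V_ge _ Xxm; rewrite d00 /S !mul0r; lra.
  have dp : 0 < delta by rewrite lt_def dn0 d0.
  rewrite -ler_pdivlMl //; apply: ge_sup; first by exists (psi xm), xm.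
  move=> _ [y Fy <-]; rewrite ler_pdivlMl //.
  have [Xy phiy] := F0P y Fy; have := V_ge _ Xy; rewrite phiy; lra.
have dist_ge0 x : 0 <= distNorm N F0 x.
  apply: lb_le_inf; first by exists (N (xm - x)), xm.
  by move=> _ [y _ <-].
have dist_le x y : F0 y -> distNorm N F0 x <= N (y - x).
  move=> Fy; apply: ge_inf; last by exists y.
  by exists 0 => _ [z _ <-].
have E0 : Feps X phi 0 = F0.
  apply/seteqP; split => y [Xy h]; split => //.
    apply/le_anti/andP; split; last by rewrite subr0 in h.
    by rewrite hsphi; exact: xmax.
  by rewrite h subr0.
rewrite /gfun E0.
set g := sup [set distNorm N F0 x | x in Feps X phi (delta * Mi)].
have hsD : has_sup [set distNorm N F0 x | x in Feps X phi (delta * Mi)].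
  split.
    exists (distNorm N F0 xm), xm => //; split => //; rewrite hsphi.
    have : 0 <= delta * Mi by exact: mulr_ge0.
    rewrite /S; lra.
  exists (C * (B + B)) => _ [x [Xx _] <-].
  apply: le_trans (dist_le x xm F0xm) _; apply: le_trans (HC _) _.
  apply: ler_wpM2l => //; apply: le_trans (ler_normB _ _) _.
  exact: lerD (HB _ Xxm) (HB _ Xx).
have g_ge x : Feps X phi (delta * Mi) x -> distNorm N F0 x <= g.
  by move=> Fx; apply: (sup_upper_bound hsD); exists x.
have g0 : 0 <= g.
  apply: le_trans (dist_ge0 xm) (g_ge _ _); split => //; rewrite hsphi.
  have : 0 <= delta * Mi by exact: mulr_ge0.
  rewrite /S; lra.
have w0 : 0 <= Lpsi * delta by exact: mulr_ge0.
rewrite hsphi ger0_norm ?subr_ge0 //.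
suff : V <= S + delta * sP + Lpsi * delta * g by lra.
apply: ge_sup; first by exists (phi xm + delta * psi xm), xm.
move=> _ [x Xx <-].
have wg0 : 0 <= Lpsi * delta * g by exact: mulr_ge0.
have [h|h] := leP (phi x + delta * psi x) (S + delta * sP); first lra.
have inF : Feps X phi (delta * Mi) x.
  split => //; rewrite hsphi.
  have : psi x - sP <= Mi by have := psi_sup _ Xx; rewrite /Mi; lra.
  move/(ler_wpM2l d0); rewrite /Mi; lra.
have key y : F0 y ->
    phi x + delta * psi x - (S + delta * sP) <= Lpsi * delta * N (y - x).
  move=> Fy; have [Xy phiy] := F0P y Fy.
  have := lip _ _ Xx Xy; rewrite NB ler_norml => /andP[_ h2].
  have := psi_sP y Fy => h3.
  have : psi x - sP <= Lpsi * N (y - x) by lra.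
  move/(ler_wpM2l d0); have := xmax _ Xx; rewrite /S mulrA [delta * Lpsi]mulrC; lra.
have [w|w] := eqVneq (Lpsi * delta) 0.
  by have := key _ F0xm; rewrite w !mul0r; lra.
have wp : 0 < Lpsi * delta by rewrite lt_def w w0.
have : (Lpsi * delta)^-1 * (phi x + delta * psi x - (S + delta * sP)) <= distNorm N F0 x.
  apply: lb_le_inf; first by exists (N (xm - x)), xm.
  by move=> _ [y Fy <-]; rewrite ler_pdivrMl // key.
rewrite ler_pdivrMl // => h4.
have := ler_wpM2l w0 (g_ge _ inF); lra.
Qed.
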